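(* The functor $(\mathbb{A}^{(S)})^{\infty}\times\textup{B}(\mathbb{Z}/p\mathbb{Z})\longrightarrow\Delta_{\mathbb{Z}/p\mathbb{Z}}$ (described in the context) is an equivalence of fibered categories.
   Context: Work over $k=\mathbb{F}_p$ with $G=\mathbb{Z}/p\mathbb{Z}$. For a ring $B$, $B((t))=B[[t]][t^{-1}]$ is the ring of Laurent series. $\Delta_{\mathbb{Z}/p\mathbb{Z}}$ is the category fibered in groupoids over the category of affine $\mathbb{F}_p$-schemes whose fiber over $\textup{Spec} B$ is the groupoid of $\mathbb{Z}/p\mathbb{Z}$-torsors over $B((t))$. By Artin–Schreier theory, for an $\mathbb{F}_p$-algebra $C$ the groupoid $\textup{B}(\mathbb{Z}/p\mathbb{Z})(C)$ of $\mathbb{Z}/p\mathbb{Z}$-torsors over $C$ is identified with the category whose objects are elements $c\in C$ (corresponding to $C[X]/(X^p-X-c)$ with action $X\mapsto X+f$, $f\in\mathbb{F}_p$) and whose morphisms $c\to d$ are elements $u\in C$ with $u^p-u+c=d$ (composition is the sum); in particular $\Delta_{\mathbb{Z}/p\mathbb{Z}}(B)$ is described this way with $C=B((t))$. Let $S=\{n\geq 1 : p\nmid n\}$ and let $\mathbb{A}^{(S)}$ be the functor on $\mathbb{F}_p$-algebras with $\mathbb{A}^{(S)}(B)$ the set of maps $b\colon S\to B$ with $\{s : b_s\neq 0\}$ finite. For a functor $X$ on affine $\mathbb{F}_p$-schemes, $X^{\infty}$ denotes the direct limit of the direct system of Frobenius morphisms $X\xrightarrow{F}X\xrightarrow{F}\cdots$.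 For $k\in\mathbb{N}$ define $\phi_k\colon\mathbb{A}^{(S)}\to\Delta_{\mathbb{Z}/p\mathbb{Z}}$ by $\phi_k(b)=\sum_{s\in S}b_s t^{-sp^k}\in B((t))$, and $\psi_k\colon\mathbb{A}^{(S)}\times\textup{B}(\mathbb{Z}/p\mathbb{Z})\to\Delta_{\mathbb{Z}/p\mathbb{Z}}$ by $\psi_k(b,b_0)=\phi_k(b)+b_0$. For all $b\in\mathbb{A}^{(S)}(B)$ and $b_0\in B$ there is a natural morphism $-\phi_k(b)\colon\psi_{k+1}\circ(F_{\mathbb{A}^{(S)}}\times\textup{id}_{\textup{B}(\mathbb{Z}/p\mathbb{Z})})(b,b_0)\to\psi_k(b,b_0)$ (where $F_{\mathbb{A}^{(S)}}$ is the Frobenius of $\mathbb{A}^{(S)}$), and these maps induce the functor $(\mathbb{A}^{(S)})^{\infty}\times\textup{B}(\mathbb{Z}/p\mathbb{Z})\to\Delta_{\mathbb{Z}/p\mathbb{Z}}$ of the claim. *)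

(* Defs.v *)
From HB Require Import structures.
From mathcomp Require Import all_boot all_order all_algebra zify.
From Stdlib Require Import ClassicalEpsilon.
Set Implicit Arguments. Unset Strict Implicit. Unset Printing Implicit Defensive.
Import Order.TTheory GRing.Theory Num.Theory.
Local Open Scope ring_scope.

(* Laurent series B((t)) = B[[t]][t^-1]: Z-indexed coefficient         *)
(* families that vanish below some index.                              *)
Section Laurent.
Variable B : comPzRingType.

Record laurent := Laurent {
  lcoef : int -> B;
  lcoef_bdd : exists N : int, forall n : int, n < N -> lcoef n = 0 }.

Definition lbnd (a : laurent) : int :=
  proj1_sig (constructive_indefinite_description _ (lcoef_bdd a)).

Lemma lbndP a n : n < lbnd a -> lcoef a n = 0.
Proof.
rewrite /lbnd; case: constructive_indefinite_description => N /= H; exact: H.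
Qed.

Lemma ladd_bdd (a b : laurent) :
  exists N : int, forall n : int, n < N -> lcoef a n + lcoef b n = 0.
Proof.
exists (Num.min (lbnd a) (lbnd b)) => n; rewrite lt_min => /andP[ha hb].
by rewrite !lbndP ?addr0.
Qed.
Definition ladd (a b : laurent) : laurent :=
  @Laurent (fun n => lcoef a n + lcoef b n) (ladd_bdd a b).

Lemma lopp_bdd (a : laurent) :
  exists N : int, forall n : int, n < N -> - lcoef a n = 0.
Proof. by exists (lbnd a) => n hn; rewrite lbndP ?oppr0. Qed.
Definition lopp (a : laurent) : laurent := @Laurent (fun n => - lcoef a n) (lopp_bdd a).

Lemma lconst_bdd (c : B) :
  exists N : int, forall n : int, n < N -> (if n == 0 then c else 0) = 0.
Proof. by exists 0 => n hn; rewrite lt_eqF. Qed.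
Definition lconst (c : B) : laurent := @Laurent _ (lconst_bdd c).

Definition lzero : laurent := lconst 0.
Definition lone : laurent := lconst 1.

(* Cauchy product: (ab)_n = sum_{i+j=n} a_i b_j, the sum ranging over *)
(* lbnd a <= i, lbnd b <= j (outside this range the terms vanish).    *)
Definition lmul_coef (a b : laurent) (n : int) : B :=
  if lbnd a + lbnd b <= n then
    \sum_(j < (absz (n - lbnd a - lbnd b)%R).+1)
       lcoef a (lbnd a + j%:Z) * lcoef b (n - lbnd a - j%:Z)
  else 0.

Lemma lmul_bdd (a b : laurent) :
  exists N : int, forall n : int, n < N -> lmul_coef a b n = 0.
Proof. by exists (lbnd a + lbnd b) => n hn; rewrite /lmul_coef lt_geF. Qed.
Definition lmul (a b : laurent) : laurent := @Laurent _ (lmul_bdd a b).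

Definition lexp (u : laurent) (k : nat) : laurent := iter k (lmul u) lone.

Definition lsum (s : seq laurent) : laurent := foldr ladd lzero s.

(* Artin-Schreier description of B(Z/pZ)(B((t))):                    *)
(* a morphism c -> d is u with u^p - u + c = d.                        *)
Definition lhom (p : nat) (c d u : laurent) : Prop :=
  ladd (ladd (lexp u p) (lopp u)) c = d.

End Laurent.

(* The functor A^(S): finitely supported maps S -> B, S = {n>=1, p∤n}, *)
(* encoded as maps nat -> B vanishing outside S.                       *)
Section AS.
Variables (p : nat) (B : comPzRingType).

Definition inS (s : nat) : bool := (0 < s)%N && ~~ (p %| s)%N.

Record AS := MkAS {
  asf : nat -> B;
  as_supp : forall s, ~~ inS s -> asf s = 0;
  as_fin : exists N : nat, forall s, (N <= s)%N -> asf s = 0 }.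

Section Frob.
Hypothesis p_gt0 : (0 < p)%N.

Lemma ASF_supp (b : AS) s : ~~ inS s -> asf b s ^+ p = 0.
Proof. by move=> h; rewrite (as_supp b h) expr0n eqn0Ngt p_gt0. Qed.
Lemma ASF_fin (b : AS) : exists N : nat, forall s, (N <= s)%N -> asf b s ^+ p = 0.
Proof.
case: (as_fin b) => N HN; exists N => s hs.
by rewrite HN // expr0n eqn0Ngt p_gt0.
Qed.
Definition ASF (b : AS) : AS := @MkAS (fun s => asf b s ^+ p) (@ASF_supp b) (ASF_fin b).
End Frob.

(* phi_k(b) = sum_{s in S} b_s t^{- s p^k}, given coefficientwise:   *)
(* the coefficient of t^n is b_s if n = - s p^k, and 0 otherwise.    *)
Definition phi_coef (k : nat) (b : AS) (n : int) : B :=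
  if (n < 0) && (p ^ k %| absz n)%N then asf b (absz n %/ p ^ k)%N else 0.

Lemma phi_bdd k (b : AS) :
  exists N : int, forall n : int, n < N -> phi_coef k b n = 0.
Proof.
case: (as_fin b) => N HN.
exists (- ((N * p ^ k)%N)%:Z) => n hn; rewrite /phi_coef.
case: ifP => // /andP[n0 /divnK dq]; apply: HN.
set P := (p ^ k)%N in dq *; set q := (absz n %/ P)%N in dq *.
rewrite leqNgt; apply/negP => qN.
have : (q * P <= N * P)%N by rewrite leq_mul2r ltnW ?orbT.
rewrite dq; lia.
Qed.
Definition phi (k : nat) (b : AS) : laurent B := @Laurent _ _ (phi_bdd k b).

Definition psi (k : nat) (b : AS) (b0 : B) : laurent B := ladd (phi k b) (lconst b0).

End AS.

(* The functor (A^(S))^oo x B(Z/pZ) -> Delta on the fibre over Spec B. *)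
(* An object of (A^(S))^oo(B) is represented by (k, b) (b at stage k *)
(* of the Frobenius direct system); (k,b) ~ (k',b') iff they agree at  *)
(* some later stage m.                                                 *)
Section Functor.
Variables (p : nat) (B : comPzRingType) (p_gt0 : (0 < p)%N).

Definition Fit (j : nat) (b : AS p B) : AS p B := iter j (ASF p_gt0) b.

Definition colim_eq (k : nat) (b : AS p B) (k' : nat) (b' : AS p B) : Prop :=
  exists m : nat, [/\ (k <= m)%N, (k' <= m)%N & Fit (m - k) b = Fit (m - k') b'].

(* the composite of the transition isomorphisms -phi_j(F^(j-k) b),     *)
(* k <= j < m, is  - trans k m b : psi_m(F^(m-k) b, b0) -> psi_k(b, b0) *)
Definition trans (k m : nat) (b : AS p B) : laurent B :=
  lsum [seq phi j (Fit (j - k) b) | j <- iota k (m - k)].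

(* image under the functor of the morphism                              *)
(*   (id, v) : ([k,b], b0) -> ([k',b'], b0')                            *)
(* (v : b0 -> b0' in B(Z/pZ)(B)), computed through a common stage m     *)
(* with F^(m-k) b = F^(m-k') b'.                                        *)
Definition fmor (k k' m : nat) (b b' : AS p B) (v : B) : laurent B :=
  ladd (ladd (trans k m b) (lconst v)) (lopp (trans k' m b')).

End Functor.

(* Main.v *)
Require Import Defs.
From HB Require Import structures.
From mathcomp Require Import all_boot all_order all_algebra zify ring.
From Stdlib Require Import ProofIrrelevance FunctionalExtensionality.
Import Order.TTheory GRing.Theory Num.Theory.
Local Open Scope ring_scope.
Set Implicit Arguments. Unset Strict Implicit.

Definition Bnz (B : comPzRingType) (h : (1:B) != 0) : Type := B.
HB.instance Definition _ (B : comPzRingType) (h : (1:B) != 0) := GRing.ComPzRing.copy (@Bnz B h) B.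
HB.instance Definition _ (B : comPzRingType) (h : (1:B) != 0) := GRing.PzSemiRing_isNonZero.Build (@Bnz B h) h.

Section Frob.
Variables (p : nat) (B : comPzRingType).
Hypotheses (hp : prime p) (hB : (p%:R : B) = 0).

Lemma p_gt0' : (0 < p)%N. Proof. exact: prime_gt0. Qed.

Lemma mulrn_p (x : B) m : x *+ (p * m) = 0.
Proof. by rewrite mulrnA -(mulr_natr x) hB mulr0 mul0rn. Qed.

Lemma frobD (x y : B) : (x + y) ^+ p = x ^+ p + y ^+ p.
Proof.
rewrite exprDn.
have p1 : (1 < p)%N by exact: prime_gt1.
case: p p1 hp mulrn_p => // [[//|q]] _ hq hm.
rewrite big_ord_recr big_ord_recl /= subn0 subnn bin0 binn !mulr1n expr0 mulr1 mul1r.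
rewrite big1 ?addr0 // => i _.
have /dvdnP[m ->] : (q.+2 %| 'C(q.+2, bump 0 i))%N.
  by apply: prime_dvd_bin => //; rewrite /bump /= add1n ltnS ltn_ord.
by rewrite mulnC hm.
Qed.

Lemma frob0 : (0 : B) ^+ p = 0.
Proof. by rewrite expr0n eqn0Ngt p_gt0'. Qed.

Lemma frobN (x : B) : (- x) ^+ p = - x ^+ p.
Proof.
apply/eqP; rewrite -subr_eq0 opprK addrC -frobD subrr frob0 //.
Qed.

Lemma frobB (x y : B) : (x - y) ^+ p = x ^+ p - y ^+ p.
Proof. by rewrite frobD frobN. Qed.

Lemma frob_sum I (r : seq I) (P : pred I) (F : I -> B) :
  (\sum_(i <- r | P i) F i) ^+ p = \sum_(i <- r | P i) F i ^+ p.
Proof. exact: (big_morph (fun x => x ^+ p) frobD frob0). Qed.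

Lemma frobnD e (x y : B) : (x + y) ^+ (p ^ e) = x ^+ (p ^ e) + y ^+ (p ^ e).
Proof.
elim: e => [|e IH]; first by rewrite !expr1.
by rewrite expnSr !exprM IH frobD.
Qed.

Lemma frobn0 e : (0 : B) ^+ (p ^ e) = 0.
Proof. by rewrite expr0n expn_eq0 eqn0Ngt p_gt0'. Qed.

Lemma frobnN e (x : B) : (- x) ^+ (p ^ e) = - x ^+ (p ^ e).
Proof.
elim: e => [|e IH]; first by rewrite !expr1.
by rewrite expnSr !exprM IH frobN.
Qed.

Lemma frobn_sum e I (r : seq I) (P : pred I) (F : I -> B) :
  (\sum_(i <- r | P i) F i) ^+ (p ^ e) = \sum_(i <- r | P i) F i ^+ (p ^ e).
Proof. exact: (big_morph (fun x => x ^+ (p ^ e)) (frobnD e) (frobn0 e)). Qed.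

Fixpoint cpow (c : nat -> B) (j : nat) (k : nat) : B :=
  if j is j'.+1 then \sum_(i < k.+1) c i * cpow c j' (k - i) else (k == 0%N)%:R.

Lemma cpow_poly (h : (1:B) != 0) M c j k : (k < M)%N ->
  cpow c j k = ((\poly_(i < M) (c i : Bnz h)) ^+ j)`_k.
Proof.
elim: j k => [|j IH] k kM /=.
  by rewrite expr0 coef1.
rewrite exprS coefM; apply: eq_bigr => i _.
rewrite coef_poly.
have iM : (i < M)%N by rewrite (leq_ltn_trans _ kM) // -ltnS.
rewrite iM.
have kiM : (k - i < M)%N by rewrite (leq_ltn_trans _ kM) // leq_subr.
by rewrite IH //.
Qed.

Lemma cpow_frob c k : cpow c p k = if (p %| k)%N then c (k %/ p)%N ^+ p else 0.
Proof.
have [h0|h] := eqVneq (1 : B) 0.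
  have z (x : B) : x = 0 by rewrite -(mulr1 x) h0 mulr0.
  by rewrite (z (cpow _ _ _)) (z (if _ then _ else _)).
rewrite (@cpow_poly h k.+1) //.
have chp : p \in [pchar {poly Bnz h}].
  by rewrite pchar_poly; apply/andP; split => //; apply/eqP; exact: hB.
rewrite -(pFrobenius_autE chp) poly_def rmorph_sum /=.
rewrite coef_sum.
have term (i : 'I_k.+1) : (Frobenius_aut chp ((c i : Bnz h) *: ('X^i : {poly Bnz h})))`_k = (c i ^+ p) * ((k == i * p)%N)%:R.
  by rewrite (pFrobenius_autE chp) exprZn -exprM coefZ coefXn.
under eq_bigr => i _ do rewrite term.
case: ifP => [/dvdnP[q kq]|nd].
  subst k.
  have qk : (q < (q * p).+1)%N by rewrite ltnS leq_pmulr ?p_gt0'.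
  rewrite mulnK ?p_gt0' // (bigD1 (Ordinal qk)) //= eqxx mulr1 big1 ?addr0 //.
  move=> i /eqP ne; rewrite eqn_mul2r eqn0Ngt p_gt0' /=.
  case: eqP => [e|]; last by rewrite mulr0.
  by case: ne; apply: val_inj => /=.
rewrite big1 // => i _.
case: eqP => [e|]; last by rewrite mulr0.
by have := dvdn_mull i (dvdnn p); rewrite -e nd.
Qed.
End Frob.

Section L.
Variable B : comPzRingType.
Implicit Types a b u : laurent B.

Definition lvalid a (L : int) := forall n, n < L -> lcoef a n = 0.

Lemma lbnd_valid a : lvalid a (lbnd a).
Proof. move=> n; exact: lbndP. Qed.

Lemma lvalid_le a L L' : lvalid a L -> L' <= L -> lvalid a L'.
Proof. by move=> v le n nL; apply: v; apply: lt_le_trans nL le. Qed.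

Lemma lext a b : lcoef a =1 lcoef b -> a = b.
Proof.
case: a b => fa ha [fb hb] /= e.
have efg : fa = fb by apply: functional_extensionality.
subst fb; congr Laurent; exact: proof_irrelevance.
Qed.

Lemma abszK (x : int) : 0 <= x -> (absz x)%:Z = x.
Proof. by case: x. Qed.

Definition W a b (n L : int) (m : nat) : B :=
  \sum_(j < m) lcoef a (L + j%:Z) * lcoef b (n - L - j%:Z).

Lemma W_shiftL a b n L m : lcoef a (L - 1) = 0 -> W a b n (L - 1) m.+1 = W a b n L m.
Proof.
move=> h; rewrite /W big_ord_recl /= addr0 h mul0r add0r.
apply: eq_bigr => j _; rewrite /bump /= add1n.
by congr (lcoef _ _ * lcoef _ _); lia.
Qed.

Lemma W_extR a b n L m Lb : lvalid b Lb -> n - Lb + 1 <= L + m%:Z ->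
  W a b n L m.+1 = W a b n L m.
Proof.
move=> vb h; rewrite /W big_ord_recr /= (vb _) ?mulr0 ?addr0 //; lia.
Qed.

Lemma W_down a b n L m La : lvalid a La -> L <= La -> forall d : nat,
  W a b n (L - d%:Z) (m + d) = W a b n L m.
Proof.
move=> va hL; elim=> [|d IH]; first by rewrite subr0 addn0.
have -> : L - d.+1%:Z = (L - d%:Z) - 1 by lia.
rewrite addnS W_shiftL ?IH //; apply: va; lia.
Qed.

Lemma W_up a b n L m Lb : lvalid b Lb -> n - Lb + 1 <= L + m%:Z -> forall e : nat,
  W a b n L (m + e) = W a b n L m.
Proof.
move=> vb h; elim=> [|e IH]; first by rewrite addn0.
rewrite addnS (@W_extR a b n L (m + e) Lb vb) ?IH //; lia.
Qed.

Lemma W_eq a b La Lb n (va : lvalid a La) (vb : lvalid b Lb) L m L' m' :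
  L <= La -> n - Lb + 1 <= L + m%:Z -> L' <= La -> n - Lb + 1 <= L' + m'%:Z ->
  W a b n L m = W a b n L' m'.
Proof.
wlog le : L m L' m' / L' <= L.
  move=> H h1 h2 h3 h4; case: (lerP L' L) => le; first exact: H.
  by symmetry; apply: H => //; apply: ltW.
move=> h1 h2 h3 h4.
have [d ed] : exists d : nat, L' = L - d%:Z by exists (absz (L - L')); rewrite abszK; lia.
subst L'; rewrite -(W_down b n m va h1 d).
case: (leqP (m + d) m') => c.
  have [e ->] : exists e, m' = (m + d + e)%N by exists (m' - (m + d))%N; lia.
  rewrite (@W_up a b n (L - d%:Z) (m + d) Lb vb _ e) //; lia.
have [e ->] : exists e, (m + d = m' + e)%N by exists (m + d - m')%N; lia.
rewrite (@W_up a b n (L - d%:Z) m' Lb vb _ e) //; lia.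
Qed.

Lemma lvalid_max a L1 L2 : lvalid a L1 -> lvalid a L2 -> lvalid a (Num.max L1 L2).
Proof.
move=> v1 v2 n; rewrite lt_max => /orP[] h; [exact: v1|exact: v2].
Qed.

Lemma lmul_W a b La Lb (va : lvalid a La) (vb : lvalid b Lb) n L m :
  L <= La -> n - Lb + 1 <= L + m%:Z -> lcoef (lmul a b) n = W a b n L m.
Proof.
move=> h1 h2.
set A := lbnd a; set Bb := lbnd b.
have va' := lvalid_max va (@lbnd_valid a).
have vb' := lvalid_max vb (@lbnd_valid b).
have hA : A <= Num.max La A by rewrite le_max lexx orbT.
have hL : L <= Num.max La A by rewrite le_max h1.
have hBb : Bb <= Num.max Lb Bb by rewrite le_max lexx orbT.
have hLb : Lb <= Num.max Lb Bb by rewrite le_max lexx.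
rewrite /= /lmul_coef -/A -/Bb.
case: ifP => c.
  rewrite (_ : \sum_(j < _) _ = W a b n A (absz (n - A - Bb)%R).+1) //.
  apply: (W_eq va' vb') => //; lia.
rewrite (_ : 0 = W a b n A 0); last by rewrite /W big_ord0.
apply: (W_eq va' vb') => //; lia.
Qed.

End L.

Section L2.
Variable B : comPzRingType.
Implicit Types a b u : laurent B.

Lemma lexp_coef u L (vu : lvalid u L) j n :
  lcoef (lexp u j) n =
  if j%:Z * L <= n then cpow (fun i => lcoef u (L + i%:Z)) j (absz (n - j%:Z * L)%R) else 0.
Proof.
elim: j n => [|j IH] n.
  rewrite mul0r /= /lexp /=; case: ifP => h.
    by rewrite (eqP h).
  by case: ifP => // _; rewrite subr0; case: n h => [[|k]|k].
have vj : lvalid (lexp u j) (j%:Z * L).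
  by move=> x hx; rewrite IH lt_geF.
have e : j.+1%:Z * L = j%:Z * L + L by rewrite intS mulrDl mul1r addrC.
set JL := j%:Z * L in vj IH e *; clearbody JL.
rewrite e.
change (lexp u j.+1) with (lmul u (lexp u j)).
case: ifP => c.
  rewrite (lmul_W vu vj (L := L) (m := (absz (n - (JL + L))%R).+1)) //; last by lia.
  rewrite /W /=; apply: eq_bigr => i _.
  rewrite IH ifT; last by have := ltn_ord i; lia.
  congr (_ * cpow _ _ _); have := ltn_ord i; lia.
rewrite (lmul_W vu vj (L := L) (m := 0)) //; last by lia.
by rewrite /W big_ord0.
Qed.

End L2.

Section Fr.
Variables (p : nat) (B : comPzRingType).
Hypotheses (hp : prime p) (hB : (p%:R : B) = 0).
Implicit Types a b u : laurent B.

Lemma pz_gt0 : (0 : int) < p%:Z.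
Proof. by rewrite ltz_nat prime_gt0. Qed.

Lemma lexpF1 u q : lcoef (lexp u p) (q * p%:Z) = lcoef u q ^+ p.
Proof.
rewrite (lexp_coef (@lbnd_valid _ u)); set L := lbnd u.
have e : q * p%:Z - p%:Z * L = (q - L) * p%:Z by rewrite mulrBl [L * _]mulrC.
case: ifP => c.
  have qL : L <= q by rewrite -(ler_pM2r pz_gt0) mulrC.
  rewrite (cpow_frob hp hB) e abszM /= dvdn_mull // mulnK ?prime_gt0 //.
  by rewrite abszK ?subr_ge0 // addrC subrK.
have qL : q < L by rewrite -(ltr_pM2r pz_gt0) ltNge [L * _]mulrC c.
by rewrite lbndP // frob0.
Qed.

Lemma lexpF2 u n : ~~ (p %| absz n)%N -> lcoef (lexp u p) n = 0.
Proof.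
move=> nd; rewrite (lexp_coef (@lbnd_valid _ u)); set L := lbnd u.
case: ifP => // c; rewrite (cpow_frob hp hB); case: ifP => // d.
have : (p%:Z %| n - p%:Z * L)%Z by rewrite dvdzE.
case/dvdzP => q eq.
have : (p%:Z %| n)%Z.
  have -> : n = (q + L) * p%:Z by rewrite mulrDl -eq mulrC subrK.
  exact: dvdz_mull.
by rewrite dvdzE (negbTE nd).
Qed.

Lemma dvd_ex (n : int) : (p %| absz n)%N -> exists q, n = q * p%:Z.
Proof. by move=> h; apply/dvdzP; rewrite dvdzE. Qed.

End Fr.

Section Main.
Variables (p : nat) (B : comPzRingType).
Hypotheses (hp : prime p) (hB : (p%:R : B) = 0).
Variable pg : (0 < p)%N.
Implicit Types a u : laurent B.
Implicit Types b c : AS p B.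

Lemma asf_Fit j b s : asf (Fit pg j b) s = asf b s ^+ (p ^ j).
Proof.
elim: j => [|j IH]; first by rewrite expr1.
by rewrite /= -/(Fit pg j b) IH expnSr exprM.
Qed.

Lemma Fit_S j b : Fit pg j.+1 b = ASF pg (Fit pg j b).
Proof. by []. Qed.


Lemma phi_ge0 k b (n : int) : 0 <= n -> phi_coef k b n = 0.
Proof. by rewrite /phi_coef => h; rewrite ltNge h. Qed.

Lemma phi_ndvd (j : nat) (c : AS p B) (n : int) : (0 < j)%N -> ~~ (p %| absz n)%N -> phi_coef j c n = 0.
Proof.
move=> j0 nd; rewrite /phi_coef; case: ifP => // /andP[_ d].
by move: nd; rewrite (dvdn_trans (dvdn_exp j0 (dvdnn p)) d).
Qed.

Lemma phi_frob j c (q : int) :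
  phi_coef j c q ^+ p = phi_coef j.+1 (ASF pg c) (q * p%:Z).
Proof.
rewrite /phi_coef pmulr_llt0 ?pz_gt0 // abszM /= expnSr dvdn_pmul2r //.
case: ifP => _; last exact: frob0.
by rewrite divnMr.
Qed.

Lemma lsum_coef (s : seq (laurent B)) n : lcoef (lsum s) n = \sum_(x <- s) lcoef x n.
Proof.
elim: s => [|x s IH]; first by rewrite big_nil /= if_same.
by rewrite big_cons /= IH.
Qed.

Lemma trans_coef k m b n :
  lcoef (trans pg k m b) n = \sum_(k <= j < m) phi_coef j (Fit pg (j - k) b) n.
Proof. by rewrite lsum_coef big_map. Qed.

Lemma T1 k m b n : ~~ (p %| absz n)%N -> (k <= m)%N ->
  lcoef (trans pg k m b) n = phi_coef k b n - phi_coef m (Fit pg (m - k) b) n.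
Proof.
move=> nd km; rewrite trans_coef.
case: (ltngtP k m) km => // [lt|eq] _; last first.
  by subst; rewrite big_geq // subnn subrr.
rewrite big_ltn // subnn /= big1_seq ?addr0.
  by rewrite (@phi_ndvd m _ n _ nd) ?subr0 //; apply: leq_ltn_trans lt.
move=> j /andP[_]; rewrite mem_index_iota => /andP[kj _].
apply: (@phi_ndvd j _ n _ nd); exact: leq_ltn_trans (leq0n k) kj.
Qed.

Lemma T2 k m b (q : int) : (k <= m)%N ->
  lcoef (trans pg k m b) q ^+ p - lcoef (trans pg k m b) (q * p%:Z) =
  phi_coef m (Fit pg (m - k) b) (q * p%:Z) - phi_coef k b (q * p%:Z).
Proof.
move=> km; rewrite !trans_coef (frob_sum hp hB).
rewrite -sumrB (telescope_sumr_eq (fun j => phi_coef j (Fit pg (j - k) b) (q * p%:Z))) //.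
  by rewrite subnn.
move=> j /andP[kj jm]; rewrite phi_frob subSn //.
Qed.

End Main.

Section Main2.
Variables (p : nat) (B : comPzRingType).
Hypotheses (hp : prime p) (hB : (p%:R : B) = 0).
Variable pg : (0 < p)%N.
Implicit Types a u : laurent B.
Implicit Types b c : AS p B.

Lemma lhomE (c d u : laurent B) : lhom p c d u <->
  forall n, lcoef (lexp u p) n - lcoef u n + lcoef c n = lcoef d n.
Proof.
split; first by move=> <- n.
by move=> h; apply: lext => n; exact: h.
Qed.

Lemma mulp_eq0 (q : int) : (q * p%:Z == 0) = (q == 0).
Proof. by rewrite mulf_eq0 eqz_nat eqn0Ngt (prime_gt0 hp) orbF. Qed.

Lemma T2' k m b (q : int) : (k <= m)%N ->
  lcoef (trans pg k m b) q ^+ p = lcoef (trans pg k m b) (q * p%:Z) +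
  (phi_coef m (Fit pg (m - k) b) (q * p%:Z) - phi_coef k b (q * p%:Z)).
Proof. by move=> km; rewrite -(T2 hp hB) // addrC subrK. Qed.

Lemma part2a k k' m b b' (b0 b0' v : B) : (k <= m)%N -> (k' <= m)%N ->
  Fit pg (m - k) b = Fit pg (m - k') b' -> v ^+ p - v + b0 = b0' ->
  lhom p (psi k b b0) (psi k' b' b0') (fmor pg k k' m b b' v).
Proof.
move=> km k'm EF hv; subst b0'; apply/lhomE => n.
case: (boolP (p %| absz n)%N) => [/dvd_ex [q ->] | nd].
  rewrite (lexpF1 hp hB) /= (frobB hp hB) (frobD hp hB) !T2' // -EF mulp_eq0.
  case: (eqVneq q 0) => [->|q0]; last first.
    by rewrite (@frob0 p B hp); ring.
  ring.
have n0 : (n == 0) = false.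
  by apply/negP => /eqP e; move: nd; rewrite e dvdn0.
rewrite (lexpF2 hp hB) // /= n0 !T1 // -EF; ring.
Qed.

Lemma part2b k k' m b b' (v w : B) :
  fmor pg k k' m b b' v = fmor pg k k' m b b' w -> v = w.
Proof.
move=> /(congr1 (fun x => lcoef x 0)) /=; rewrite !trans_coef.
rewrite !big1 => [|j _|j _]; try exact: phi_ge0.
by rewrite !add0r !subr0.
Qed.

End Main2.

Definition sg (σ : bool) (N : nat) : int := if σ then - N%:Z else N%:Z.

Lemma abs_sg σ N : absz (sg σ N) = N.
Proof. by case: σ => //=; rewrite abszN. Qed.

Lemma sg_mul σ N M : sg σ (N * M) = sg σ N * M%:Z.
Proof. by case: σ; rewrite /sg PoszM ?mulNr. Qed.

Lemma sg_eq0 σ N : (sg σ N == 0) = (N == 0%N).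
Proof. by case: σ; rewrite /sg ?oppr_eq0. Qed.

Section Main3.
Variables (p : nat) (B : comPzRingType).
Hypotheses (hp : prime p) (hB : (p%:R : B) = 0).
Variable pg : (0 < p)%N.
Implicit Types a u : laurent B.
Implicit Types b c : AS p B.

Lemma ASext (x y : AS p B) : asf x =1 asf y -> x = y.
Proof.
case: x y => fx sx nx [fy sy ny] /= e.
have efg : fx = fy by apply: functional_extensionality.
subst fy; congr MkAS; exact: proof_irrelevance.
Qed.

Lemma chain u σ s : ~~ (p %| s)%N -> forall j,
  \sum_(i < j.+1) (lcoef (lexp u p) (sg σ (s * p ^ i)) - lcoef u (sg σ (s * p ^ i)))
     ^+ (p ^ (j - i)) = - lcoef u (sg σ (s * p ^ j)).
Proof.
move=> ns; elim=> [|j IH].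
  rewrite big_ord1 /= subn0 expn0 expr1 muln1 (lexpF2 hp hB) ?sub0r //.
  by rewrite abs_sg.
rewrite big_ord_recr /= subnn expn0 expr1.
have -> : \sum_(i < j.+1)
   (lcoef (lexp u p) (sg σ (s * p ^ i)) - lcoef u (sg σ (s * p ^ i))) ^+ (p ^ (j.+1 - i))
   = (\sum_(i < j.+1)
   (lcoef (lexp u p) (sg σ (s * p ^ i)) - lcoef u (sg σ (s * p ^ i))) ^+ (p ^ (j - i))) ^+ p.
  rewrite (frob_sum hp hB); apply: eq_bigr => i _.
  by rewrite -exprM -expnSr subSn // -ltnS.
rewrite IH (frobN hp hB) expnSr mulnA.
have e : sg σ (s * p ^ j * p) = sg σ (s * p ^ j) * p%:Z by rewrite sg_mul.
rewrite {1}e (lexpF1 hp hB); ring.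
Qed.

Lemma decomp (n : int) : n != 0 -> exists σ s j, [/\ inS p s & n = sg σ (s * p ^ j)].
Proof.
move=> n0.
have pn : (0 < absz n)%N by rewrite absz_gt0.
case: (pfactor_coprime hp pn) => s cs e.
exists (n < 0), s, (logn p (absz n)); split.
  rewrite /inS -(prime_coprime _ hp) cs andbT lt0n.
  by apply/eqP => s0; move: pn; rewrite e s0.
rewrite -e; case: n {n0 pn e} => N //=.

Qed.

End Main3.

Section Main4.
Variables (p : nat) (B : comPzRingType).
Hypotheses (hp : prime p) (hB : (p%:R : B) = 0).
Variable pg : (0 < p)%N.
Implicit Types a u : laurent B.
Implicit Types b c : AS p B.

Lemma fmor0 k k' m b b' (v : B) : lcoef (fmor pg k k' m b b' v) 0 = v.
Proof.
rewrite /= !trans_coef !big1 => [|j _|j _]; try exact: phi_ge0.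
by rewrite !add0r subr0.
Qed.

Lemma lhom0 k k' b b' (b0 b0' : B) u :
  lhom p (psi k b b0) (psi k' b' b0') u -> lcoef u 0 ^+ p - lcoef u 0 + b0 = b0'.
Proof.
move/lhomE => /(_ 0); rewrite -(mul0r p%:Z) (lexpF1 hp hB) mul0r /= !phi_ge0 //.
by rewrite !add0r.
Qed.

Lemma part2c k k' m b b' (b0 b0' : B) u : (k <= m)%N -> (k' <= m)%N ->
  Fit pg (m - k) b = Fit pg (m - k') b' ->
  lhom p (psi k b b0) (psi k' b' b0') u ->
  exists2 v : B, v ^+ p - v + b0 = b0' & fmor pg k k' m b b' v = u.
Proof.
move=> km k'm EF hu; have hv := lhom0 hu.
exists (lcoef u 0) => //.
have hf := part2a hp hB km k'm EF hv.
move/lhomE: hu => H; move/lhomE: hf => Hf.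
apply: lext => n; case: (eqVneq n 0) => [->|n0]; first exact: fmor0.
have [σ [s [j [sS ->]]]] := decomp hp n0.
have ns : ~~ (p %| s)%N by case/andP: sS.
apply: oppr_inj; rewrite -!(chain hp hB _ _ ns); apply: eq_bigr => i _.
congr (_ ^+ _); apply: (addIr (lcoef (psi k b b0) (sg σ (s * p ^ i)))).
by rewrite H Hf.
Qed.


Lemma Pchain k b s i : inS p s ->
  phi_coef k b (sg true (s * p ^ i)) = if i == k then asf b s else 0.
Proof.
case/andP=> s0 ns.
have pi0 : (0 < p ^ i)%N by rewrite expn_gt0 pg.
rewrite /phi_coef abs_sg /= oppr_lt0 ltz_nat muln_gt0 s0 pi0 /=.
case: (ltngtP i k) => [ik|ki|->]; last by rewrite dvdn_mull // mulnK ?expn_gt0 ?pg.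
  case: ifP => // d; move: ns.
  have : (p * p ^ i %| s * p ^ i)%N.
    by apply: dvdn_trans d; rewrite -expnS dvdn_exp2l.
  by rewrite dvdn_pmul2r // => ->.
case: ifP => // _.
have -> : (s * p ^ i %/ p ^ k = s * p ^ (i - k))%N.
  by rewrite -{1}(subnK (ltnW ki)) expnD mulnA mulnK // expn_gt0 pg.
apply: as_supp; rewrite /inS negb_and; apply/orP; right; rewrite negbK.
by apply: dvdn_mull; apply: dvdn_exp (dvdnn p); rewrite subn_gt0.
Qed.

Lemma sum_ind (m k : nat) (y : B) : (k <= m)%N ->
  \sum_(i < m.+1) (if (i : nat) == k then y else 0) ^+ (p ^ (m - i)) = y ^+ (p ^ (m - k)).
Proof.
move=> km; rewrite (bigD1 (Ordinal (_ : k < m.+1)%N)) //= eqxx big1 ?addr0 // => i ne.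
rewrite ifN ?(@frobn0 p B hp) //.
Qed.

Lemma part1 k k' b b' (b0 b0' : B) u :
  lhom p (psi k b b0) (psi k' b' b0') u -> colim_eq pg k b k' b'.
Proof.
move/lhomE => H.
set L := lbnd u.
exists (k + k' + absz L)%N; split; try lia.
apply: ASext => s; rewrite !asf_Fit.
case: (boolP (inS p s)) => sS; last by rewrite !(as_supp _ sS) !(@frobn0 p B hp).
set m := (k + k' + absz L)%N.
have ns : ~~ (p %| s)%N by case/andP: sS.
have := chain hp hB u true ns m.
rewrite lbndP; last first.
  have h1 : (absz L < p ^ absz L)%N by apply: ltn_expl; exact: prime_gt1.
  have h2 : (p ^ absz L <= p ^ m)%N by rewrite leq_exp2l ?prime_gt1 //; lia.
  have h3 : (p ^ m <= s * p ^ m)%N by rewrite leq_pmull //; case/andP: sS.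
  rewrite /sg -/L; move: h1 h2 h3; set X := (s * p ^ m)%N; set Y := (p ^ m)%N.
  set Z := (p ^ absz L)%N; lia.
rewrite oppr0.
have e i : (i < m.+1)%N -> lcoef (lexp u p) (sg true (s * p ^ i)) - lcoef u (sg true (s * p ^ i))
   = (if i == k' then asf b' s else 0) - (if i == k then asf b s else 0).
  move=> _; apply: (addIr (lcoef (psi k b b0) (sg true (s * p ^ i)))).
  have nz : (- (s * p ^ i)%N%:Z == 0) = false.
    rewrite oppr_eq0 eqz_nat muln_eq0 expn_eq0 (gtn_eqF pg) andFb orbF.
    by case/andP: sS; rewrite lt0n => /negbTE.
  rewrite H /= !Pchain // nz !addr0; ring.
under eq_bigr => i _ do rewrite (e i (ltn_ord i)).
have fB (x y : B) e0 : (x - y) ^+ (p ^ e0) = x ^+ (p ^ e0) - y ^+ (p ^ e0).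
  by rewrite (frobnD hp hB) (frobnN hp hB).
under eq_bigr => i _ do rewrite fB.
rewrite sumrB !sum_ind; try lia.
by move/eqP; rewrite subr_eq0 => /eqP.
Qed.
End Main4.

Section ES.
Variables (p : nat) (B : comPzRingType).
Hypotheses (hp : prime p) (hB : (p%:R : B) = 0).
Implicit Types c u : laurent B.

Definition Y c (σ : bool) (s j : nat) : B :=
  - \sum_(i < j.+1) lcoef c (sg σ (s * p ^ i)) ^+ (p ^ (j - i)).

Lemma Y_S c σ s j : Y c σ s j.+1 = Y c σ s j ^+ p - lcoef c (sg σ (s * p ^ j.+1)).
Proof.
rewrite /Y big_ord_recr /= subnn expn0 expr1 (frobN hp hB) (frob_sum hp hB) opprD.
congr (- _ - _); apply: eq_bigr => i _.
by rewrite -exprM -expnSr subSn // -ltnS.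
Qed.

Lemma Y_zero c s j : (absz (lbnd c) < s)%N -> Y c true s j = 0.
Proof.
move=> hs; rewrite /Y big1 ?oppr0 // => i _.
rewrite lbndP ?(@frobn0 p B hp) //.
have h : (s <= s * p ^ i)%N by rewrite leq_pmulr // expn_gt0 prime_gt0.
rewrite /sg; move: h hs; set X := (s * p ^ i)%N; lia.
Qed.

Definition uf c (K : nat) (n : int) : B :=
  if n == 0 then 0 else
  if ~~ (n < 0) || (logn p (absz n) < K)%N
  then Y c (n < 0) (absz n %/ p ^ logn p (absz n))%N (logn p (absz n)) else 0.

Lemma uf_sg c K σ s j : inS p s ->
  uf c K (sg σ (s * p ^ j)) = if ~~ σ || (j < K)%N then Y c σ s j else 0.
Proof.
case/andP=> s0 ns.
have pj : (0 < p ^ j)%N by rewrite expn_gt0 prime_gt0.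
have lg : logn p (s * p ^ j) = j.
  by rewrite logn_Gauss ?pfactorK // prime_coprime.
have sgl : (sg σ (s * p ^ j) < 0) = σ.
  by case: σ; rewrite /sg ?oppr_lt0 ltz_nat ?muln_gt0 ?s0 ?pj // ltNge.
rewrite /uf sg_eq0 muln_eq0 expn_eq0 (gtn_eqF (prime_gt0 hp)) andFb orbF.
rewrite (gtn_eqF s0) /= abs_sg lg sgl mulnK //.
Qed.

Lemma uf_bdd c K : exists N : int, forall n : int, n < N -> uf c K n = 0.
Proof.
set A := absz (lbnd c).
exists (- (p ^ K * A.+1)%N%:Z) => n hn.
have n0 : n != 0.
  apply/eqP => e; move: hn; rewrite e.
  have : (0 < p ^ K * A.+1)%N by rewrite muln_gt0 expn_gt0 prime_gt0.
  set X := (p ^ K * A.+1)%N; lia.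
have [σ [s [j [sS e]]]] := decomp hp n0.
rewrite e uf_sg //.
case: σ e => e; last first.
  by move: hn; rewrite e /sg; lia.
case: ifP => //= jK; apply: Y_zero.
rewrite -/A ltnNge; apply/negP => sA.
have h1 : (s * p ^ j <= A * p ^ K)%N.
  by apply: leq_mul => //; rewrite leq_exp2l ?prime_gt1 // ltnW.
move: hn; rewrite e /sg; move: h1; set X := (s * p ^ j)%N; set Z := (p ^ K)%N.
rewrite (mulnC A); lia.
Qed.

Definition bf c (K s : nat) : B := if inS p s then - Y c true s K else 0.

Lemma bf_supp c K s : ~~ inS p s -> bf c K s = 0.
Proof. by rewrite /bf => /negbTE ->. Qed.

Lemma bf_fin c K : exists N : nat, forall s, (N <= s)%N -> bf c K s = 0.
Proof.
exists (absz (lbnd c)).+1 => s hs; rewrite /bf Y_zero ?oppr0 ?if_same //.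
Qed.

End ES.

Section ES2.
Variables (p : nat) (B : comPzRingType).
Hypotheses (hp : prime p) (hB : (p%:R : B) = 0).
Implicit Types c u : laurent B.

Lemma part0 c : exists (k : nat) (b : AS p B) (b0 : B) (u : laurent B),
      lhom p (psi k b b0) c u.
Proof.
have pg := prime_gt0 hp.
set K := (absz (lbnd c)).+1.
pose b := @MkAS p B (bf p c K) (@bf_supp p B c K) (bf_fin hp c K).
pose u := @Laurent B (uf p c K) (uf_bdd hp c K).
exists K, b, (lcoef c 0), u; apply/lhomE => n.
case: (eqVneq n 0) => [->|n0].
  rewrite -{1}(mul0r p%:Z) (lexpF1 hp hB) /= /uf eqxx (@frob0 p B hp) phi_ge0 //.
  by rewrite subrr !add0r.
have [σ [s [j [sS ->]]]] := decomp hp n0.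
have ns : ~~ (p %| s)%N by case/andP: sS.
have psiE : lcoef (psi K b (lcoef c 0)) (sg σ (s * p ^ j)) =
    if σ && (j == K) then - Y p c true s K else 0.
  rewrite /= sg_eq0 muln_eq0 expn_eq0 (gtn_eqF pg) andFb orbF.
  case/andP: (sS) => s0 _; rewrite (gtn_eqF s0) addr0.
  case: σ => /=; last by rewrite phi_ge0.
  by rewrite (@Pchain p B pg) //; case: eqP => //= _; rewrite /bf sS.
rewrite psiE /=; clear psiE.
case: j => [|j].
  rewrite (lexpF2 hp hB); last by rewrite abs_sg expn0 muln1.
  rewrite /= (uf_sg hp) //= orbT /Y big_ord1 /= expr1 andbF; ring.
have e : sg σ (s * p ^ j.+1) = sg σ (s * p ^ j) * p%:Z by rewrite expnSr mulnA sg_mul.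
rewrite {1}e (lexpF1 hp hB) /= !(uf_sg hp) //.
case: σ {e} => /=; last by rewrite (Y_S hp hB); ring.
case: (ltngtP j.+1 K) => [jK|Kj|jK].
  by rewrite (Y_S hp hB); ring.
  rewrite (@frob0 p B hp) lbndP; first by ring.
  have h1 : (p ^ j.+1 <= s * p ^ j.+1)%N by rewrite leq_pmull //; case/andP: sS.
  have h2 : (p ^ K <= p ^ j.+1)%N by rewrite leq_exp2l ?prime_gt1 // ltnW.
  have h3 : (K < p ^ K)%N by apply: ltn_expl; exact: prime_gt1.
  rewrite /sg; move: h1 h2 h3; rewrite /K.
  set X := (s * p ^ j.+1)%N; set Y := (p ^ j.+1)%N; set Z := (p ^ (absz (lbnd c)).+1)%N.
  lia.
rewrite -jK (Y_S hp hB); ring.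
Qed.

End ES2.

Unset Implicit Arguments. Set Strict Implicit.

Theorem theorem4p16 (p : nat) (hp : prime p) (B : comPzRingType)
    (hB : (p%:R : B) = 0) :
  (* essential surjectivity *)
  (forall c : laurent B, exists (k : nat) (b : AS p B) (b0 : B) (u : laurent B),
      lhom p (psi k b b0) c u) /\
  (* full faithfulness *)
  (forall (k k' : nat) (b b' : AS p B) (b0 b0' : B),
     (~ colim_eq (prime_gt0 hp) k b k' b' ->
        forall u : laurent B, ~ lhom p (psi k b b0) (psi k' b' b0') u) /\
     (forall m : nat, (k <= m)%N -> (k' <= m)%N ->
        Fit (prime_gt0 hp) (m - k) b = Fit (prime_gt0 hp) (m - k') b' ->
        [/\ forall v : B, v ^+ p - v + b0 = b0' ->
              lhom p (psi k b b0) (psi k' b' b0') (fmor (prime_gt0 hp) k k' m b b' v),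
            forall v w : B, v ^+ p - v + b0 = b0' -> w ^+ p - w + b0 = b0' ->
              fmor (prime_gt0 hp) k k' m b b' v = fmor (prime_gt0 hp) k k' m b b' w ->
              v = w
          & forall u : laurent B, lhom p (psi k b b0) (psi k' b' b0') u ->
              exists2 v : B, v ^+ p - v + b0 = b0' &
                fmor (prime_gt0 hp) k k' m b b' v = u])).
Proof.
split; first exact: (part0 hp hB).
move=> k k' b b' b0 b0'; split.
  by move=> nc u hu; apply: nc; exact: (part1 hp hB _ hu).
move=> m km k'm EF; split.
- by move=> v hv; exact: (part2a hp hB km k'm EF hv).
- by move=> v w _ _; exact: part2b.
- by move=> u hu; exact: (part2c hp hB km k'm EF hu).
Qed.
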